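(* Let $a,b\in\mathbb F^*$, set $\hat a=a\,b\,\theta^n(b^{-1})$, and let $g\in\mathcal R$. Then $g$ is a right divisor of $x^n-a$ if and only if $gb$ is a right divisor of $x^n-\hat a$.
   Context: $\mathbb F$ is a finite field, $\theta\in\mathrm{Aut}(\mathbb F)$, $\mathcal R=\mathbb F[x;\theta]$ the skew polynomial ring (elements $\sum f_ix^i$ with left coefficients, multiplication determined by $xb=\theta(b)x$), $n\in\mathbb N$. $g$ is a right divisor of $f$ if $f=sg$ for some $s\in\mathcal R$. *)

(* Defs.v *)
(* Elements sum_i f_i x^i (left coefficients) are represented by their
   coefficient sequences, i.e. by values of {poly F}; addition is the usual
   one, and multiplication is the skew product determined by x b = theta(b) x:
     (sum_i f_i x^i) (sum_j g_j x^j) = sum_{i,j} f_i theta^i(g_j) x^(i+j). *)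
From HB Require Import structures.
From mathcomp Require Import all_boot all_order all_algebra all_field.
Set Implicit Arguments. Unset Strict Implicit. Unset Printing Implicit Defensive.
Import GRing.Theory.
Local Open Scope ring_scope.

Definition theta_pow (F : finFieldType) (theta : {rmorphism F -> F}) (i : nat)
  : F -> F := iter i theta.

Definition skew_mul (F : finFieldType) (theta : {rmorphism F -> F})
  (p q : {poly F}) : {poly F} :=
  \sum_(i < size p) \sum_(j < size q)
     (p`_i * theta_pow theta i q`_j) *: 'X^(i + j).

Definition skew_rdvd (F : finFieldType) (theta : {rmorphism F -> F})
  (g f : {poly F}) : Prop :=
  exists s : {poly F}, f = skew_mul theta s g.

(* Main.v *)
Require Import Defs.
From HB Require Import structures.
From mathcomp Require Import all_boot all_order all_algebra all_field.
From mathcomp Require Import ring.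
Import GRing.Theory.
Local Open Scope ring_scope.

Set Implicit Arguments.
Section S.
Variables (F : finFieldType) (theta : {rmorphism F -> F}).
Local Notation tp := (theta_pow theta).
Local Notation sm := (skew_mul theta).

Lemma tpM i x y : tp i (x * y) = tp i x * tp i y.
Proof. elim: i => //= i IH; by rewrite /theta_pow /= -!/(tp i) IH rmorphM. Qed.
Lemma tp0 i : tp i 0 = 0.
Proof. elim: i => //= i IH; by rewrite /theta_pow /= -!/(tp i) IH rmorph0. Qed.
Lemma tp1 i : tp i 1 = 1.
Proof. elim: i => //= i IH; by rewrite /theta_pow /= -!/(tp i) IH rmorph1. Qed.
Lemma tpV i x : tp i x^-1 = (tp i x)^-1.
Proof. elim: i => //= i IH; by rewrite /theta_pow /= -!/(tp i) IH fmorphV. Qed.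
Lemma tpD i j x : tp (i + j) x = tp i (tp j x).
Proof. by rewrite /theta_pow iterD. Qed.
Lemma tp_eq0 i x : (tp i x == 0) = (x == 0).
Proof. elim: i => //= i IH; by rewrite /theta_pow /= -!/(tp i) fmorph_eq0 IH. Qed.

Lemma widen_sum (G : nat -> {poly F}) (n m : nat) : (n <= m)%N ->
  (forall i : nat, (n <= i)%N -> G i = 0) -> \sum_(i < n) G i = \sum_(i < m) G i.
Proof.
move=> nm H; rewrite (big_ord_widen m G nm) big_mkcond; apply: eq_bigr => i _.
by case: ifP => // /negbT; rewrite -leqNgt => /H ->.
Qed.

Lemma sm_ext (p q : {poly F}) (m m' : nat) : (size p <= m)%N -> (size q <= m')%N ->
  sm p q = \sum_(i < m) \sum_(j < m') (p`_i * tp i q`_j) *: 'X^(i + j).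
Proof.
move=> hp hq; rewrite /skew_mul.
transitivity (\sum_(i < size p) \sum_(j < m') (p`_i * tp i q`_j) *: 'X^(i + j)).
  apply: eq_bigr => i _.
  apply: (@widen_sum (fun j => (p`_i * tp i q`_j) *: 'X^(i + j))) => // j hj.
  by rewrite (nth_default _ hj) tp0 mulr0 scale0r.
apply: (@widen_sum (fun i => \sum_(j < m') (p`_i * tp i q`_j) *: 'X^(i + j))) => // i hi.
by apply: big1 => j _; rewrite nth_default // mul0r scale0r.
Qed.

Lemma sm_coef (p q : {poly F}) (m m' k : nat) : (size p <= m)%N -> (size q <= m')%N ->
  (sm p q)`_k = \sum_(i < m) \sum_(j < m') (p`_i * tp i q`_j) * (((i + j)%N == k)%:R).
Proof.
move=> hp hq; rewrite (@sm_ext _ _ _ _ hp hq) coef_sum; apply: eq_bigr => i _.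
rewrite coef_sum; apply: eq_bigr => j _; by rewrite coefZ coefXn eq_sym.
Qed.

Lemma smC_poly (p : {poly F}) c : sm p c%:P = \poly_(i < size p) (p`_i * tp i c).
Proof.
rewrite (@sm_ext p c%:P (size p) 1) //; last by rewrite size_polyC leq_b1.
rewrite poly_def; apply: eq_bigr => i _; by rewrite big_ord1 coefC addn0.
Qed.

Lemma smC_coef (p : {poly F}) c (k : nat) : (sm p c%:P)`_k = p`_k * tp k c.
Proof.
rewrite smC_poly coef_poly; case: ltnP => // h.
by rewrite nth_default // mul0r.
Qed.

Lemma smC_size (p : {poly F}) c : (size (sm p c%:P) <= size p)%N.
Proof. by rewrite smC_poly size_poly. Qed.

Lemma smZ d (s g : {poly F}) : sm (d *: s) g = d *: sm s g.
Proof.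
rewrite (@sm_ext (d *: s) g (size s) (size g)) ?size_scale_leq //.
rewrite /skew_mul scaler_sumr; apply: eq_bigr => i _.
rewrite scaler_sumr; apply: eq_bigr => j _; by rewrite coefZ scalerA mulrA.
Qed.

Lemma smA_C (s g : {poly F}) c : sm (sm s g) c%:P = sm s (sm g c%:P).
Proof.
apply/polyP => k.
rewrite smC_coef (@sm_coef s g (size s) (size g)) //.
rewrite (@sm_coef s (sm g c%:P) (size s) (size g)) // ?smC_size //.
rewrite mulr_suml; apply: eq_bigr => i _.
rewrite mulr_suml; apply: eq_bigr => j _.
rewrite smC_coef; case: eqP => [<-|_]; last by rewrite !mulr0 mul0r.
by rewrite !mulr1 tpM tpD mulrA.
Qed.

Lemma smCV (g : {poly F}) c : c != 0 -> sm (sm g c%:P) c^-1%:P = g.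
Proof.
move=> c0; apply/polyP => k.
by rewrite !smC_coef -mulrA -tpM divff // tp1 mulr1.
Qed.

Lemma smE (n : nat) a b : b != 0 ->
  sm ('X^n - a%:P) b%:P = tp n b *: ('X^n - (a * b * tp n b^-1)%:P).
Proof.
move=> b0; apply/polyP => k.
have tb0 : tp n b != 0 by rewrite tp_eq0.
rewrite smC_coef coefZ !coefB !coefXn !coefC tpV.
case: (eqVneq k n) => [kn|kn]; case: (eqVneq k 0) => [k0|k0].
- subst; rewrite /= /theta_pow /= in tb0 *; field; exact: b0.
- by rewrite kn /= subr0 mul1r mulr1.
- subst; rewrite {1}/theta_pow /=; field; exact: tb0.
- by rewrite !subr0 mul0r mulr0.
Qed.

End S.
Unset Implicit Arguments.

Theorem proposition4p6 (F : finFieldType) (theta : {rmorphism F -> F})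
  (theta_aut : bijective theta) (n : nat) (a b : F)
  (a_neq0 : a != 0) (b_neq0 : b != 0) (g : {poly F}) :
  let ahat := a * b * theta_pow theta n b^-1 in
  skew_rdvd theta g ('X^n - a%:P) <->
  skew_rdvd theta (skew_mul theta g b%:P) ('X^n - ahat%:P).
Proof.
move=> ahat.
have tb0 : theta_pow theta n b != 0 by rewrite tp_eq0.
have E := @smE F theta n a b b_neq0.
split=> -[s hs].
- exists ((theta_pow theta n b)^-1 *: s).
  rewrite smZ -smA_C -hs E scalerA mulVf // scale1r //.
- exists (theta_pow theta n b *: s).
  rewrite -(@smCV F theta (@GRing.add _ (GRing.exp (polyX F) n) (- a%:P)) b b_neq0) E -/ahat hs !smZ.
  by rewrite smA_C smCV.
Qed.
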